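(* Let $\gamma:\mathbb{Z}\to[0,1]$ be a probability distribution on $\mathbb{Z}$ with bounded support and $\gamma(a)\in\mathbb{Q}$ for all $a$. For $n\ge1$ let $\gamma_n$ be the distribution on $\mathbb{Z}_n$ given by $\gamma_n(k)=\sum_{a\equiv k \pmod n}\gamma(a)$. Then either $\gamma$ is symmetric (i.e. $\gamma(a)=\gamma(-a)$ for all $a\in\mathbb{Z}$), or there exists $N$ such that for every prime $n>N$ the random walk on $\mathbb{Z}_n$ with step distribution $\gamma_n$ is reconstructive.
   Context: The random walk on $\mathbb{Z}_n$ with step distribution $\gamma_n$ has $v(1)$ uniform on $\mathbb{Z}_n$ and independent steps with $\mathbb{P}(v(t+1)-v(t)=k)=\gamma_n(k)$. It is reconstructive if, for any two labelings $f_1,f_2:\mathbb{Z}_n\to\{0,1\}$, the distributions of $\{f_1(v(t))\}_{t\ge1}$ and $\{f_2(v(t))\}_{t\ge1}$ coincide only if there is $\ell$ with $f_1(k)=f_2(k+\ell)$ for all $k$. *)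

(* Defs.v *)
From mathcomp Require Import all_boot all_order all_algebra.
Set Implicit Arguments. Unset Strict Implicit. Unset Printing Implicit Defensive.
Import Order.TTheory GRing.Theory Num.Theory.
Local Open Scope ring_scope.

Definition window_sum (gamma : int -> rat) (M : nat) : rat :=
  \sum_(i < (M.*2).+1) gamma (i%:Z - M%:Z).

Definition symmetric_distr (gamma : int -> rat) : Prop :=
  forall a : int, gamma a = gamma (- a).

(* gamma_n(k) = sum_{a = k mod n} gamma(a); as supp gamma is inside
   [-M, M], it suffices to sum over that window.  'Z_n is Z/nZ (n >= 2). *)
Definition gamma_n (gamma : int -> rat) (M n : nat) (k : 'Z_n) : rat :=
  \sum_(i < (M.*2).+1)
     (if ((i%:Z - M%:Z)%:~R == k) then gamma (i%:Z - M%:Z) else 0).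

(* rest g f v w = P(f(v(2)) = w_1, ..., f(v(|w|+1)) = w_|w| | v(1) = v) *)
Fixpoint rest_prob (n : nat) (g : 'Z_n -> rat) (f : 'Z_n -> bool)
    (v : 'Z_n) (w : seq bool) : rat :=
  match w with
  | [::] => 1
  | b :: w' => \sum_(u : 'Z_n) g (u - v) * (f u == b)%:R * rest_prob g f u w'
  end.

(* Finite-dimensional law of the label sequence {f(v(t))}_{t>=1}:
   label_law g f w = P(f(v(1)) = w_1, ..., f(v(T)) = w_T), T = size w,
   for the walk with v(1) uniform on Z_n and i.i.d. steps of law g. *)
Definition label_law (n : nat) (g : 'Z_n -> rat) (f : 'Z_n -> bool)
    (w : seq bool) : rat :=
  match w with
  | [::] => 1
  | b :: w' => n%:R^-1 * \sum_(v : 'Z_n) (f v == b)%:R * rest_prob g f v w'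
  end.

Definition reconstructive (n : nat) (g : 'Z_n -> rat) : Prop :=
  forall f1 f2 : 'Z_n -> bool,
    (forall w : seq bool, label_law g f1 w = label_law g f2 w) ->
    exists l : 'Z_n, forall k : 'Z_n, f1 k = f2 (k + l).

Arguments gamma_n gamma M n k : clear implicits.

(* Main.v *)
Require Import Defs.
From mathcomp Require Import all_boot all_order all_algebra all_field.
From mathcomp Require Import ring zify.
From Stdlib Require Import FunctionalExtensionality.
Import Order.TTheory GRing.Theory Num.Theory.
Local Open Scope ring_scope.

Section Fourier.
Variable m : nat.
Local Notation p := m.+2.
Variable z : algC.
Hypothesis zP : p.-primitive_root z.

Definition E (x : 'Z_p) : algC := z ^+ (val x).

Lemma E_add x y : E (x + y) = E x * E y.
Proof. by rewrite /E /= prim_expr_mod // exprD. Qed.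

Lemma E0 : E 0 = 1.
Proof. by rewrite /E /= expr0. Qed.

Lemma E_neq0 x : E x != 0.
Proof. by rewrite /E expf_neq0 // (prim_root_eq0 zP). Qed.

Lemma E_opp x : E (- x) = (E x)^-1.
Proof.
apply: (mulfI (E_neq0 x)); rewrite -E_add subrr E0 divff //; exact: E_neq0.
Qed.

Lemma E_eq1 x : (E x == 1) = (x == 0).
Proof.
rewrite /E -(prim_order_dvd zP); apply/idP/eqP => [|->] //.
case: x => [[|x]] lt; first by move=> _; apply: val_inj.
by move=> /(dvdn_leq (ltn0Sn x)); rewrite leqNgt lt.
Qed.

Lemma sum_E x : \sum_(k : 'Z_p) E (k * x) = if x == 0 then p%:R else 0.
Proof.
case: eqP => [->|/eqP nx].
  under eq_bigr do rewrite mulr0 E0.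
  by rewrite sumr_const card_ord.
set S := \sum_k _.
have : S = E x * S.
  rewrite {1}/S (reindex_inj (addrI 1)) /= mulr_sumr.
  by apply: eq_bigr => k _; rewrite mulrDl mul1r E_add.
move/eqP; rewrite -subr_eq0 -{1}[S]mul1r -mulrBl mulf_eq0 subr_eq0 eq_sym E_eq1.
by rewrite (negbTE nx) /= => /eqP.
Qed.

Definition FT (h : 'Z_p -> algC) (k : 'Z_p) :=
  p%:R^-1 * \sum_y h y * E (- (k * y)).

Lemma p_neq0 : p%:R != 0 :> algC.
Proof. by rewrite pnatr_eq0. Qed.

Lemma inv_FT h x : h x = \sum_k FT h k * E (k * x).
Proof.
rewrite /FT.
under eq_bigr do rewrite -mulrA mulr_suml.
rewrite -mulr_sumr exchange_big /=.
under eq_bigr => y _.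
  under eq_bigr do rewrite -mulrA -E_add addrC -mulrBr.
  rewrite -mulr_sumr sum_E subr_eq0.
  over.
rewrite (bigD1 x) //= eqxx big1 => [|y /negbTE]; last by rewrite eq_sym => ->; rewrite mulr0.
by rewrite addr0 mulrC mulfK // p_neq0.
Qed.


Definition T (g h : 'Z_p -> algC) (v : 'Z_p) : algC := \sum_u g (u - v) * h u.
Definition lam (g : 'Z_p -> algC) (k : 'Z_p) : algC := \sum_d g d * E (k * d).

Lemma T_E g (c : 'Z_p -> algC) :
  T g (fun v => \sum_k c k * E (k * v)) =
  (fun v => \sum_k c k * lam g k * E (k * v)).
Proof.
apply: functional_extensionality => v; rewrite /T.
under eq_bigr do rewrite mulr_sumr.
rewrite exchange_big /=; apply: eq_bigr => k _.
rewrite (reindex_inj (addIr v)) /= /lam mulr_sumr mulr_suml.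
apply: eq_bigr => d _; rewrite addrK mulrDr E_add; ring.
Qed.

Lemma iter_T_E g (c : 'Z_p -> algC) t :
  iter t (T g) (fun v => \sum_k c k * E (k * v)) =
  (fun v => \sum_k c k * lam g k ^+ t * E (k * v)).
Proof.
elim: t => [|t IH] /=.
  by apply: functional_extensionality => v; apply: eq_bigr => k _; rewrite expr0 mulr1.
rewrite IH.
have -> : (fun v => \sum_k c k * lam g k ^+ t * E (k * v)) =
          (fun v => \sum_k (c k * lam g k ^+ t) * E (k * v)) by [].
rewrite T_E; apply: functional_extensionality => v.
by apply: eq_bigr => k _; rewrite exprS; ring.
Qed.

Definition Qc g h s t :=
  \sum_v h v * iter s (T g) (fun u => h u * iter t (T g) h u) v.

Lemma Qc_eq g h s t : Qc g h s t = p%:R * \sum_m \sum_k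
   FT h (- m) * FT h (m - k) * FT h k * lam g m ^+ s * lam g k ^+ t.
Proof.
have hE : h = fun v => \sum_k FT h k * E (k * v).
  by apply: functional_extensionality => v; exact: inv_FT.
have H1 : iter t (T g) h = fun v => \sum_k (FT h k * lam g k ^+ t) * E (k * v).
  by rewrite {1}hE iter_T_E.
have H2 : (fun u => h u * iter t (T g) h u) =
   fun u => \sum_m (\sum_k FT h (m - k) * (FT h k * lam g k ^+ t)) * E (m * u).
  apply: functional_extensionality => u; rewrite H1 /= [h u]inv_FT mulr_suml.
  under [RHS]eq_bigr do rewrite mulr_suml.
  rewrite [RHS]exchange_big /=.
  under eq_bigr do rewrite mulr_sumr.
  rewrite exchange_big /=; apply: eq_bigr => k _.
  rewrite [RHS](reindex_inj (addIr k)) /=; apply: eq_bigr => j _.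
  rewrite addrK mulrDl E_add; ring.
rewrite /Qc H2 iter_T_E.
under eq_bigr do rewrite mulr_sumr.
rewrite exchange_big /= mulr_sumr; apply: eq_bigr => mm _.
have hF : \sum_v h v * E (mm * v) = p%:R * FT h (- mm).
  rewrite /FT mulrA mulfV ?p_neq0 // mul1r.
  by apply: eq_bigr => v _; rewrite mulNr opprK.
transitivity ((\sum_v h v * E (mm * v)) *
    ((\sum_k FT h (mm - k) * (FT h k * lam g k ^+ t)) * lam g mm ^+ s)).
  by rewrite mulr_suml; apply: eq_bigr => v _; ring.
rewrite hF -mulrA; congr (_ * _); rewrite !mulr_suml mulr_sumr.
apply: eq_bigr => k _; ring.
Qed.

Lemma indep1 (L : 'Z_p -> algC) (Linj : injective L) (L0 : forall k, L k != 0)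
  (c : 'Z_p -> algC) : (forall s, \sum_k c k * L k ^+ s.+1 = 0) -> forall k, c k = 0.
Proof.
move=> H k0.
pose P := \prod_(j | j != k0) ('X - (L j)%:P).
have : \sum_(s < size P) P`_s * (\sum_k c k * L k ^+ s.+1) = 0.
  by rewrite big1 // => s _; rewrite H mulr0.
have -> : \sum_(s < size P) P`_s * (\sum_k c k * L k ^+ s.+1) =
          \sum_k c k * L k * P.[L k].
  under eq_bigr do rewrite mulr_sumr.
  rewrite exchange_big /=; apply: eq_bigr => k _.
  rewrite horner_coef mulr_sumr; apply: eq_bigr => s _; rewrite exprS; ring.
rewrite (bigD1 k0) //= big1 ?addr0 => [|k nk].
  move/eqP; rewrite !mulf_eq0 (negbTE (L0 k0)) orbF => /orP [/eqP //|].
  rewrite horner_prod; move/prodf_neq0 => [] j nj.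
  by rewrite hornerXsubC subr_eq0; apply/eqP => /Linj e; rewrite e eqxx in nj.
rewrite horner_prod (bigD1 k) //= hornerXsubC subrr !mul0r mulr0 //.
Qed.

Lemma indep2 (L : 'Z_p -> algC) (Linj : injective L) (L0 : forall k, L k != 0)
  (D : 'Z_p -> 'Z_p -> algC) :
  (forall s t, \sum_m \sum_k D m k * L m ^+ s.+1 * L k ^+ t.+1 = 0) ->
  forall m k, D m k = 0.
Proof.
move=> H.
have H1 : forall t m, \sum_k D m k * L k ^+ t.+1 = 0.
  move=> t; apply: (indep1 L Linj L0 (fun mm => \sum_k D mm k * L k ^+ t.+1)) => s.
  rewrite -[RHS](H s t).
  by apply: eq_bigr => mm _; rewrite mulr_suml; apply: eq_bigr => k _; ring.
by move=> mm; apply: (indep1 L Linj L0) => t; exact: H1.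
Qed.

Lemma Zp_p0 : (p%:R : 'Z_p) = 0.
Proof. by apply: ord_inj; rewrite val_Zp_nat // modnn. Qed.

Lemma bispec (F1 F2 : 'Z_p -> algC)
  (hB : forall mm k, F1 (- mm) * F1 (mm - k) * F1 k = F2 (- mm) * F2 (mm - k) * F2 k)
  (h0 : F1 0 = F2 0) (hnz : forall k, F1 k != 0) :
  exists l : 'Z_p, forall k, F1 k = E (k * l) * F2 k.
Proof.
have nz2 k : F2 k != 0.
  apply/negP => /eqP e; have := hB k k; rewrite subrr e mulr0 => /eqP.
  by rewrite !mulf_eq0 !(negbTE (hnz _)).
pose r k := F1 k / F2 k.
have Fr k : F1 k = r k * F2 k by rewrite /r divfK.
have r0 : r 0 = 1 by rewrite /r h0 divff.
have hr mm k : r (- mm) * r (mm - k) * r k = 1.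
  have e := hB mm k; rewrite !Fr in e.
  apply: (mulIf (x := F2 (- mm) * F2 (mm - k) * F2 k)).
    by rewrite !mulf_neq0.
  transitivity (r (- mm) * F2 (- mm) * (r (mm - k) * F2 (mm - k)) * (r k * F2 k)).
    by ring.
  by rewrite e mul1r.
have rinv k : r (- k) * r k = 1 by have := hr k k; rewrite subrr r0 mulr1.
have rnz k : r k != 0 by apply/negP => /eqP e; have := rinv k; rewrite e mulr0 => /eqP; rewrite eq_sym oner_eq0.
have rmul a b : r (a + b) = r a * r b.
  have := hr (a + b) b; rewrite addrK => e.
  apply: (mulfI (rnz (- (a + b)))); rewrite rinv -e; ring.
have rn n : r (n%:R) = r 1 ^+ n.
  elim: n => [|n IH]; first by rewrite r0 expr0.
  by rewrite mulrSr rmul IH exprSr.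
have rp : r 1 ^+ p = 1 by rewrite -rn Zp_p0 r0.
have [l hl] := prim_rootP zP rp.
exists l => k; rewrite Fr; congr (_ * _).
rewrite -[k in r k]natr_Zp rn hl -exprM /E /= prim_expr_mod // mulnC //.
Qed.

Lemma shift_rec h1 h2 (l : 'Z_p) (hF : forall k, FT h1 k = E (k * l) * FT h2 k) x :
  h1 x = h2 (x + l).
Proof.
rewrite (inv_FT h1) (inv_FT h2); apply: eq_bigr => k _.
rewrite hF mulrDr E_add; ring.
Qed.


Local Notation pQtoC := (map_poly (@ratr algC)).

Lemma CL (pr : prime p) (k : 'Z_p) (k0 : k != 0) (c : 'Z_p -> rat) :
  \sum_y ratr (c y) * E (k * y) = 0 -> forall y, c y = c 0.
Proof.
move=> H.
pose w := z ^+ k.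
have kpos : (0 < k)%N by rewrite lt0n; apply: contra k0 => /eqP e; apply/eqP/val_inj.
have wP : p.-primitive_root w.
  rewrite prim_root_exp_coprime // coprime_sym prime_coprime //.
  by apply/negP => /(dvdn_leq kpos); rewrite leqNgt ltn_ord.
have Ew y : E (k * y) = w ^+ y by rewrite /E /= prim_expr_mod // exprM.
pose P := \poly_(i < p) c (i%:R).
pose U := \poly_(i < p) (1 : rat).
have hmap (Q : nat -> rat) : pQtoC (\poly_(i < p) Q i) = \poly_(i < p) ratr (Q i).
  by apply/polyP => i; rewrite coef_map !coef_poly; case: ifP => //= _; rewrite raddf0.
have rootP : root (pQtoC P) w.
  rewrite /root hmap horner_poly; apply/eqP; rewrite -[RHS]H.
  by apply: eq_bigr => i _; rewrite Ew natr_Zp.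
have rootU : root (pQtoC U) w.
  rewrite /root hmap horner_poly; apply/eqP.
  rewrite -[RHS](_ : \sum_(y : 'Z_p) E (y * k) = 0); last by rewrite sum_E (negbTE k0).
  by apply: eq_bigr => i _; rewrite rmorph1 mul1r mulrC Ew.
have [r [Dr monr] dvr] := minCpolyP w.
have szr : size r = p.
  have := size_cyclotomic w p.
  by rewrite -(minCpoly_cyclotomic wP) Dr size_map_poly totient_prime.
have szU : size U = p by rewrite size_poly_eq // oner_neq0.
have rU : r %= U by rewrite -dvdp_size_eqp -?dvr // szr szU.
have UP : U %| P by rewrite -(eqp_dvdl _ rU) -dvr.
have [qq Pq] := dvdpP _ _ UP.
have U0 : U != 0 by rewrite -size_poly_eq0 szU.
have szq : (size qq <= 1)%N.
  case: (eqVneq qq 0) => [-> | q0]; first by rewrite size_poly0.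
  have := size_poly p (fun i => c i%:R); rewrite -/P Pq size_mul // szU.
  rewrite addnS /= => h; set a := size qq in h *; move: a h => a h; clear -h; lia.
have Ci i : (i < p)%N -> c (i%:R) = qq`_0.
  move=> ip; have := congr1 (fun q : {poly rat} => q`_i) Pq; rewrite /= coef_poly ip => ->.
  have hq := size1_polyC szq.
  by rewrite {1}hq coefCM coef_poly ip mulr1.
move=> y; rewrite -(natr_Zp y) Ci // (_ : (0 : 'Z_p) = (0%N)%:R) // Ci //.
Qed.


Definition Tq (g h : 'Z_p -> rat) (v : 'Z_p) : rat := \sum_u g (u - v) * h u.

Fixpoint allw (k : nat) : seq (seq bool) :=
  if k is k'.+1 then map (cons true) (allw k') ++ map (cons false) (allw k')
  else [:: [::]].

Lemma rest_cons g f v b w :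
  rest_prob g f v (b :: w) = Tq g (fun u => (f u == b)%:R * rest_prob g f u w) v.
Proof. by rewrite /=; apply: eq_bigr => u _; rewrite mulrA. Qed.

Lemma Tq_sum (I : Type) (r : seq I) g (H : I -> 'Z_p -> rat) v :
  \sum_(i <- r) Tq g (H i) v = Tq g (fun u => \sum_(i <- r) H i u) v.
Proof.
rewrite /Tq exchange_big /=; apply: eq_bigr => u _; by rewrite mulr_sumr.
Qed.

Lemma Tq_add g h1 h2 v : Tq g h1 v + Tq g h2 v = Tq g (fun u => h1 u + h2 u) v.
Proof. by rewrite /Tq -big_split /=; apply: eq_bigr => u _; rewrite mulrDr. Qed.

Lemma iter_Tq_sum (I : Type) (r : seq I) g (H : I -> 'Z_p -> rat) s v :
  \sum_(i <- r) iter s (Tq g) (H i) v = iter s (Tq g) (fun u => \sum_(i <- r) H i u) v.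
Proof.
elim: s v => [|s IH] v //=.
rewrite Tq_sum; congr (Tq g _ v); apply: functional_extensionality => u; exact: IH.
Qed.

Lemma marg g f k w' v :
  \sum_(w <- allw k) rest_prob g f v (w ++ w') =
  iter k (Tq g) (fun u => rest_prob g f u w') v.
Proof.
elim: k v => [|k IH] v; first by rewrite /= big_cons big_nil addr0.
have hb b (r : seq (seq bool)) : \sum_(w <- r) rest_prob g f v ((b :: w) ++ w') =
    Tq g (fun u => (f u == b)%:R * \sum_(w <- r) rest_prob g f u (w ++ w')) v.
  under eq_bigr do rewrite cat_cons rest_cons.
  by rewrite Tq_sum; congr (Tq g _ v); apply: functional_extensionality => u; rewrite mulr_sumr.
rewrite iterS [allw k.+1]/= big_cat !big_map !hb.
change (Tq g (fun u => (f u == true)%:R * \sum_(w <- allw k) rest_prob g f u (w ++ w')) v + Tq g (fun u => (f u == false)%:R * \sum_(w <- allw k) rest_prob g f u (w ++ w')) v = Tq g (iter k (Tq g) (fun u => rest_prob g f u w')) v).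
rewrite Tq_add.
congr (Tq g _ v); apply: functional_extensionality => u.
rewrite !IH -mulrDl.
by case: (f u) => /=; rewrite ?add0r ?addr0 mul1r.
Qed.

Definition Qrat (g : 'Z_p -> rat) f s t := \sum_(w1 <- allw s) \sum_(w2 <- allw t)
   label_law g f (true :: w1 ++ true :: w2 ++ [:: true]).

Lemma Qrat_eq g f s t :
  Qrat g f s t = p%:R^-1 * \sum_v (f v == true)%:R *
     iter s.+1 (Tq g) (fun x => (f x == true)%:R *
        iter t.+1 (Tq g) (fun y => (f y == true)%:R) x) v.
Proof.
rewrite /Qrat /label_law.
under eq_bigr do rewrite -mulr_sumr.
rewrite -mulr_sumr; congr (_ * _).
under eq_bigr do rewrite exchange_big.
rewrite exchange_big; apply: eq_bigr => v _.
under eq_bigr do rewrite -mulr_sumr.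
rewrite -mulr_sumr; congr (_ * _).
rewrite exchange_big.
under eq_bigr do rewrite marg.
rewrite iter_Tq_sum iterSr; congr (iter s (Tq g) _ v).
apply: functional_extensionality => u.
under eq_bigr do rewrite rest_cons.
rewrite Tq_sum; congr (Tq g _ u); apply: functional_extensionality => x.
rewrite -mulr_sumr marg iterSr; congr (_ * iter t (Tq g) _ x).
apply: functional_extensionality => y.
by rewrite rest_cons /Tq; apply: eq_bigr => u' _; rewrite mulr1.
Qed.

Lemma ratr_iter g h k v :
  ratr (iter k (Tq g) h v) = iter k (T (fun x => ratr (g x))) (fun x => ratr (h x)) v :> algC.
Proof.
elim: k v => [|k IH] v; first by [].
rewrite iterS [in RHS]iterS {1}/Tq rmorph_sum /T; apply: eq_bigr => u _.
by rewrite rmorphM; congr (_ * _); exact: IH.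
Qed.


Definition gcC (g : 'Z_p -> rat) : 'Z_p -> algC := fun x => ratr (g x).
Definition fqQ (f : 'Z_p -> bool) : 'Z_p -> rat := fun x => (f x == true)%:R.
Definition fcC (f : 'Z_p -> bool) : 'Z_p -> algC := fun x => ratr (fqQ f x).

Lemma Qmap g f s t :
  ratr (Qrat g f s t) = p%:R^-1 * Qc (gcC g) (fcC f) s.+1 t.+1.
Proof.
rewrite Qrat_eq rmorphM fmorphV rmorph_nat rmorph_sum /Qc; congr (_ * _).
apply: eq_bigr => v _; rewrite rmorphM; congr (_ * _).
apply: etrans; first exact: ratr_iter.
congr (iter _ _ _ v).
apply: functional_extensionality => x; rewrite rmorphM; congr (_ * _).
exact: ratr_iter.
Qed.

Lemma FT0 h : FT h 0 = p%:R^-1 * \sum_y h y.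
Proof.
rewrite /FT; congr (_ * _); apply: eq_bigr => y _.
by rewrite mul0r oppr0 E0 mulr1.
Qed.

Lemma law1 g f : ratr (label_law g f [:: true]) = FT (fcC f) 0.
Proof.
rewrite FT0 /label_law rmorphM fmorphV rmorph_nat rmorph_sum; congr (_ * _).
by apply: eq_bigr => v _; rewrite /= mulr1.
Qed.

Lemma fq_ge0 f x : 0 <= fqQ f x.
Proof. by rewrite /fqQ ler0n. Qed.

Lemma fq_inj f1 f2 x y : fqQ f1 x = fqQ f2 y -> f1 x = f2 y.
Proof. by rewrite /fqQ; case: (f1 x); case: (f2 y) => //= /eqP; rewrite ?oner_eq0 // eq_sym oner_eq0. Qed.

Lemma recon (pr : prime p) (g : 'Z_p -> rat)
  (hinj : injective (lam (gcC g))) (hnz : forall k, lam (gcC g) k != 0) :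
  reconstructive g.
Proof.
move=> f1 f2 hlaw.
have hQ s t : Qc (gcC g) (fcC f1) s.+1 t.+1 = Qc (gcC g) (fcC f2) s.+1 t.+1.
  have e : Qrat g f1 s t = Qrat g f2 s t.
    by rewrite /Qrat; apply: eq_bigr => w1 _; apply: eq_bigr => w2 _; apply: hlaw.
  have := congr1 (@ratr algC) e; rewrite !Qmap => /mulfI; apply.
  by rewrite invr_eq0 p_neq0.
have hF0 : FT (fcC f1) 0 = FT (fcC f2) 0 by rewrite -(law1 g f1) -(law1 g f2) hlaw.
have hB mm k : FT (fcC f1) (- mm) * FT (fcC f1) (mm - k) * FT (fcC f1) k =
               FT (fcC f2) (- mm) * FT (fcC f2) (mm - k) * FT (fcC f2) k.
  apply/eqP; rewrite -subr_eq0; apply/eqP; move: mm k.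
  apply: (indep2 _ hinj hnz (fun mm k =>
     FT (fcC f1) (- mm) * FT (fcC f1) (mm - k) * FT (fcC f1) k -
     FT (fcC f2) (- mm) * FT (fcC f2) (mm - k) * FT (fcC f2) k)) => s t.
  have := hQ s t; rewrite !Qc_eq => /mulfI; rewrite p_neq0 => /(_ isT) e.
  rewrite [X in X = _](_ : _ = \sum_mm \sum_k
     FT (fcC f1) (- mm) * FT (fcC f1) (mm - k) * FT (fcC f1) k *
         lam (gcC g) mm ^+ s.+1 * lam (gcC g) k ^+ t.+1 -
     \sum_mm \sum_k
     FT (fcC f2) (- mm) * FT (fcC f2) (mm - k) * FT (fcC f2) k *
         lam (gcC g) mm ^+ s.+1 * lam (gcC g) k ^+ t.+1); first by rewrite e subrr.
  rewrite -sumrB; apply: eq_bigr => mm _; rewrite -sumrB; apply: eq_bigr => k _.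
  by rewrite !mulrBl.
have sum_eq : \sum_v fqQ f1 v = \sum_v fqQ f2 v.
  have := hF0; rewrite !FT0 => /mulfI; rewrite invr_eq0 p_neq0 => /(_ isT).
  by rewrite /fcC -!rmorph_sum => /fmorph_inj.
case: (boolP [forall y, f1 y == f1 0]) => [/forallP hc | hnc].
  exists 0 => k; rewrite addr0 (eqP (hc k)).
  case e0 : (f1 0).
    have : \sum_v (1 - fqQ f2 v) == 0.
      rewrite sumrB -sum_eq.
      rewrite [X in _ - X](eq_bigr (fun _ => 1)) ?subrr // => v _.
      by rewrite /fqQ (eqP (hc v)) e0.
    rewrite psumr_eq0 => [/allP /(_ k (mem_index_enum _))|i _].
      by rewrite /fqQ subr_eq0; case: (f2 k).
    by rewrite /fqQ subr_ge0; case: (f2 i).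
  have : \sum_v fqQ f2 v == 0.
    rewrite -sum_eq big1 // => v _; by rewrite /fqQ (eqP (hc _)) e0.
  rewrite psumr_eq0 => [/allP /(_ k (mem_index_enum _))|i _]; last exact: fq_ge0.
  by rewrite /fqQ; case: (f2 k).
have hnz1 k : FT (fcC f1) k != 0.
  have [y hy] : exists y, f1 y != f1 0.
    by apply/existsP; rewrite -negb_forall.
  case: (eqVneq k 0) => [->|k0].
    rewrite FT0 mulf_eq0 invr_eq0 (negbTE p_neq0) /= /fcC -rmorph_sum fmorph_eq0.
    rewrite psumr_eq0 => [|i _]; last exact: fq_ge0.
    apply/allP => H; move: hy; have := H y (mem_index_enum _).
    have := H 0 (mem_index_enum _); rewrite /fqQ.
    by case: (f1 y); case: (f1 0).
  rewrite /FT mulf_eq0 invr_eq0 (negbTE p_neq0) /=; apply/negP => /eqP H.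
  have H' : \sum_y ratr (fqQ f1 y) * E (- k * y) = 0.
    by rewrite -[RHS]H; apply: eq_bigr => y' _; rewrite mulNr.
  have nk : - k != 0 by rewrite oppr_eq0.
  have /(_ y) /fq_inj := CL pr (-k) nk (fqQ f1) H'.
  by move=> e; rewrite e eqxx in hy.
have [l hl] := bispec _ _ hB hF0 hnz1.
exists l => x; apply: fq_inj; apply: (fmorph_inj (@ratr algC)).
exact: (shift_rec _ _ _ hl).
Qed.


Lemma Z1 (a : int) : ((a%:~R : 'Z_p) == 0) = (p %| `|a|)%N.
Proof.
have hn (n : nat) : ((n%:R : 'Z_p) == 0) = (p %| n)%N.
  by rewrite -val_eqE /= val_Zp_nat.
case: a => n; first exact: hn.
by rewrite NegzE mulrNz oppr_eq0 -pmulrn hn.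
Qed.

Lemma Z2 (a b : int) : (`|(a - b)%R| < p)%N -> ((a%:~R : 'Z_p) == b%:~R) = (a == b).
Proof.
move=> h; rewrite -subr_eq0 -intrB Z1 -(subr_eq0 a b).
case: (eqVneq (a - b) 0) => [->|nz]; first by rewrite dvdn0.
apply/negbTE/negP => /(dvdn_leq _); rewrite absz_gt0 nz => /(_ isT).
by rewrite leqNgt h.
Qed.

Lemma unitZ (y : 'Z_p) : prime p -> y != 0 -> y \is a GRing.unit.
Proof.
move=> pr ny; rewrite -(natr_Zp y) unitZpE // prime_coprime //.
have ypos : (0 < y)%N by rewrite lt0n; apply: contra ny => /eqP e; apply/eqP/val_inj.
by apply/negP => /(dvdn_leq ypos); rewrite leqNgt ltn_ord.
Qed.

Variable gamma : int -> rat.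
Variable M : nat.
Hypothesis hsupp : forall a : int, (M < `|a|)%N -> gamma a = 0.
Hypothesis hsum : window_sum gamma M = 1.
Hypothesis hN : (2 * M * M + 2 * M + 2 < p)%N.
Hypothesis pr : prime p.

Local Notation g := (gamma_n gamma M p).

Lemma gsum : \sum_y g y = 1.
Proof.
rewrite -hsum /gamma_n exchange_big /=; apply: eq_bigr => i _.
rewrite (bigD1 ((i%:Z - M%:Z)%:~R)) //= eqxx big1 ?addr0 // => y /negbTE.
by rewrite eq_sym => ->.
Qed.

Lemma g_at (a : int) : (`|a| <= M)%N -> g (a%:~R) = gamma a.
Proof.
move=> ha.
have i0lt : (`|(a + M%:Z)%R| < (M.*2).+1)%N by clear -ha; lia.
pose i0 : 'I_((M.*2).+1) := Ordinal i0lt.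
rewrite /gamma_n (bigD1 i0) //= big1 ?addr0.
  have -> : (`|(a + M%:Z)%R|%:Z - M%:Z) = a by clear -ha; lia.
  by rewrite eqxx.
move=> i ni; rewrite Z2; last by have := ltn_ord i; clear -ha hN; lia.
case: eqP => // e; move: ni; rewrite -val_eqE /= => /negP; case; apply/eqP.
clear -e ha; lia.
Qed.

Lemma g_supp (y : 'Z_p) : g y != 0 ->
  exists a : int, [/\ (`|a| <= M)%N, y = a%:~R & gamma a != 0].
Proof.
move=> H.
case: (boolP [exists i : 'I_((M.*2).+1),
    ((i%:Z - M%:Z)%:~R == y) && (gamma (i%:Z - M%:Z) != 0)]).
  move=> /existsP [i /andP [/eqP e ne]]; exists (i%:Z - M%:Z); split => //.
  by have := ltn_ord i; clear -hN; lia.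
rewrite negb_exists => /forallP hi; move: H; rewrite /gamma_n big1 ?eqxx // => i _.
have := hi i; rewrite negb_and negbK; case: eqP => //= _ /eqP ->; by [].
Qed.

Lemma g_zero : g ((M%:Z + 1)%:~R) = 0.
Proof.
apply/eqP; apply: contraT => /g_supp [a [ha e _]].
move/eqP: e; rewrite Z2; last by clear -ha hN; lia.
move/eqP => e; clear -e ha; lia.
Qed.

Lemma g_nconst (y0 : 'Z_p) : ~ (forall y, g y = g y0).
Proof.
move=> H; have := gsum; under eq_bigr do rewrite H.
rewrite -(H ((M%:Z + 1)%:~R)) g_zero big1 // => /eqP; by rewrite eq_sym oner_eq0.
Qed.


Lemma lam0 : lam (gcC g) 0 = 1.
Proof.
rewrite /lam /gcC -(rmorph1 (@ratr algC)) -gsum rmorph_sum.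
by apply: eq_bigr => d _; rewrite mul0r E0 mulr1.
Qed.

Lemma lam_ne0 k : lam (gcC g) k != 0.
Proof.
case: (eqVneq k 0) => [->|k0]; first by rewrite lam0 oner_eq0.
apply/negP => /eqP H.
have := CL pr k k0 (fun y => g y) H => hc.
by apply: (g_nconst 0) => y; apply: hc.
Qed.

Lemma m1_neq1 : (-1 : 'Z_p) != 1.
Proof.
apply/negP => /eqP /(congr1 (@nat_of_ord _)) /=.
rewrite (_ : Zp_trunc p = m) // (modn_small (m:=1)) // !modn_small //; lia.
Qed.

Lemma lam_eq_nz k k' : k != 0 -> k != k' -> lam (gcC g) k = lam (gcC g) k' ->
  exists d : 'Z_p, d != 1 /\ forall y, g (d * y) = g y.
Proof.
move=> k0 nkk e.
case: (eqVneq k' 0) => [k'0|k'0].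
  subst k'; rewrite lam0 in e.
  have H : \sum_y ratr (g y - (y == 0)%:R) * E (k * y) = 0.
    under eq_bigr do rewrite rmorphB mulrBl.
    rewrite sumrB -/(lam (gcC g) k) e (bigD1 0) //=. rewrite mulr0 E0 rmorph1 mulr1.
    by rewrite big1 ?addr0 ?subrr // => y /negbTE ->; rewrite rmorph0 mul0r.
  have hc := CL pr k k0 _ H.
  have g01 : g 0 = 1.
    have := gsum; rewrite (eq_bigr (fun y => (g 0 - 1) + (y == 0)%:R)); last first.
      by move=> y _; have /= := hc y; rewrite ?eqxx => h; rewrite -h subrK.
    rewrite big_split /= sumr_const card_ord (bigD1 0) //= big1 ?addr0 => [|y /negbTE -> //].
    move/eqP; rewrite -subr_eq0 addrK -mulr_natr mulf_eq0 pnatr_eq0 /= subr_eq0.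
    by case/orP => /eqP.
  have gy y : y != 0 -> g y = 0.
    move=> ny; have := hc y; rewrite (negbTE ny) g01 eqxx subrr subr0; by [].
  exists (-1); split; first exact: m1_neq1.
  move=> y; rewrite mulN1r; case: (eqVneq y 0) => [->|ny]; first by rewrite oppr0.
  by rewrite !gy // oppr_eq0.
have ku := unitZ k pr k0; have k'u := unitZ k' pr k'0.
pose c := k^-1 * k'.
have cu : c \is a GRing.unit by rewrite unitrM unitrV ku.
pose d := c^-1.
have du : d \is a GRing.unit by rewrite unitrV.
have H : \sum_x ratr (g x - g (d * x)) * E (k * x) = 0.
  under eq_bigr do rewrite rmorphB mulrBl.
  rewrite sumrB -/(lam (gcC g) k) e /lam (reindex_inj (mulrI du)) /=.
  rewrite -sumrB big1 // => x _.
  have hk : k' * d = k by rewrite /d /c invrM ?unitrV // invrK mulrA (mulrV k'u) mul1r.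
  by rewrite mulrA hk /gcC subrr.
have hc := CL pr k k0 _ H.
exists d; split.
  apply: contra nkk => /eqP d1; apply/eqP.
  have : c = 1 by rewrite -[c]invrK -/d d1 invr1.
  by rewrite /c => /(congr1 (fun x => k * x)); rewrite mulrA (mulrV ku) mul1r mulr1.
move=> y; have := hc y; rewrite mulr0 subrr => /eqP; rewrite subr_eq0 => /eqP.
by [].
Qed.


Lemma symlem d : d != 1 -> (forall y, g (d * y) = g y) -> symmetric_distr gamma.
Proof.
move=> d1 hd.
have d0 : d != 0.
  apply/negP => /eqP d0; apply: (g_nconst 0) => y.
  by rewrite -(hd y) d0 mul0r.
have du := unitZ d pr d0.
have hd' y : g (d^-1 * y) = g y.
  by rewrite -[in RHS](_ : d * (d^-1 * y) = y) ?hd // mulrA mulrV // mul1r.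
case: (boolP [exists i : 'I_((M.*2).+1),
   (i != M :> nat) && (gamma (i%:Z - M%:Z) != 0)]) => [/existsP [i0 Pi0] | hno]; last first.
  have z0 b : (`|b| <= M)%N -> b != 0 -> gamma b = 0.
    move=> hb nb; apply/eqP; apply: contraT => gb; case/negP: hno.
    have jlt : (`|(b + M%:Z)%R| < (M.*2).+1)%N by clear -hb; lia.
    apply/existsP; exists (Ordinal jlt) => /=.
    have -> : (`|(b + M%:Z)%R|%:Z - M%:Z) = b by clear -hb; lia.
    rewrite gb andbT; apply/eqP => e; move/eqP: nb; apply; clear -e hb; lia.
  move=> a; case: (leqP `|a| M) => ha; last by rewrite !hsupp // abszN.
  case: (eqVneq a 0) => [->|na]; first by rewrite oppr0.
  by rewrite !z0 ?abszN ?oppr_eq0.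
pose P := fun i : 'I_((M.*2).+1) => (i != M :> nat) && (gamma (i%:Z - M%:Z) != 0).
case: (@arg_maxnP _ i0 P (fun i : 'I_((M.*2).+1) => `|(i%:Z - M%:Z)%R|%N) Pi0) => i Pi imax.
set a := i%:Z - M%:Z in Pi imax.
move/andP: Pi => [iM ga].
have ha : (`|a| <= M)%N by have := ltn_ord i; rewrite /a; clear -hN; lia.
have a0 : a != 0 by apply/eqP; rewrite /a => e; move/eqP: iM; apply; clear -e; lia.
have Aa : (a%:~R : 'Z_p) != 0.
  rewrite Z1; apply/negP => /(dvdn_leq _); rewrite absz_gt0 a0 => /(_ isT); clear -ha hN; lia.
have au := unitZ _ pr Aa.
have key e : e \is a GRing.unit -> (forall y, g (e * y) = g y) ->
    exists b : int, [/\ (`|b| <= M)%N, e * a%:~R = b%:~R & (`|b| <= `|a|)%N].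
  move=> eu he.
  have : g (e * a%:~R) != 0 by rewrite he g_at.
  case/g_supp => b [hb eb gb]; exists b; split => //.
  have b0 : b != 0.
    apply/eqP => b0; move: eb; rewrite b0 mulr0z => /(congr1 (fun x => e^-1 * x)).
    by rewrite mulrA mulVr // mul1r mulr0 => e0; move: Aa; rewrite e0 eqxx.
  have jlt : (`|(b + M%:Z)%R| < (M.*2).+1)%N by clear -hb; lia.
  have := imax (Ordinal jlt); rewrite /=.
  have -> : (`|(b + M%:Z)%R|%:Z - M%:Z) = b by clear -hb; lia.
  apply; rewrite /P /= -/a; have -> : (`|(b + M%:Z)%R|%:Z - M%:Z) = b by clear -hb; lia.
  rewrite gb andbT; apply/eqP => e0; move/eqP: b0; apply; clear -e0 hb; lia.
have [b [hb eb hba]] := key d du hd.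
have dVu : d^-1 \is a GRing.unit by rewrite unitrV.
have [b' [hb' eb' hba']] := key d^-1 dVu hd'.
have bb : b * b' = a * a.
  apply/eqP; rewrite -Z2.
    by rewrite !intrM -eb -eb' mulrACA mulrV // mul1r.
  have h1 : (`|(b * b')%R| <= M * M)%N by rewrite abszM leq_mul.
  have h2 : (`|(a * a)%R| <= M * M)%N by rewrite abszM leq_mul.
  clear -h1 h2 hN; lia.
have bab : `|b|%N = `|a|%N.
  have := congr1 absz bb; rewrite !abszM => e.
  have : (0 < `|a|)%N by rewrite absz_gt0.
  move: e hba hba'; set A := `|a|%N; set B := `|b|%N; set B' := `|b'|%N => e1 e2 e3 e4; clear -e1 e2 e3 e4; nia.
have [eba|eba] : b = a \/ b = - a by clear -bab; lia.
  move: eb; rewrite eba -{2}[a%:~R]mul1r => /(mulIr au) e1.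
  by rewrite e1 eqxx in d1.
have dm1 : d = -1.
  by move: eb; rewrite eba intrN => e2; apply: (mulIr au); rewrite e2 mulN1r.
move=> a'; case: (leqP `|a'| M) => ha'; last by rewrite !hsupp // abszN.
rewrite -(g_at a') // -(g_at (- a')) ?abszN // intrN -mulN1r -dm1 hd //.
Qed.

End Fourier.

From Stdlib Require Import Classical.

Theorem theorem4 (gamma : int -> rat) (M : nat)
  (hpos : forall a : int, 0 <= gamma a)
  (hsupp : forall a : int, (M < `|a|)%N -> gamma a = 0)
  (hsum : window_sum gamma M = 1) :
  symmetric_distr gamma \/
  exists N : nat, forall n : nat, prime n -> (N < n)%N ->
    reconstructive (gamma_n gamma M n).
Proof.
case: (classic (symmetric_distr gamma)) => hs; [by left | right].
exists (2 * M * M + 2 * M + 2) => n.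
case: n => [|[|m]] // pr hN.
have [z zP] := C_prim_root_exists (ltn0Sn m.+1).
apply: (recon _ _ zP pr).
  move=> k k' e; apply/eqP; apply/negP => nkk; apply: hs.
  case: (eqVneq k 0) => [k0|k0].
    have k'0 : k' != 0 by apply/eqP => e'; apply: nkk; rewrite k0 e'.
    have nkk' : k' != k by apply/eqP => e'; apply: nkk; rewrite e'.
    have [d [d1 hd]] := lam_eq_nz _ _ zP _ _ hsum hN pr _ _ k'0 nkk' (esym e).
    exact: (symlem _ _ _ hsupp hsum hN pr _ d1 hd).
  have [d [d1 hd]] := lam_eq_nz _ _ zP _ _ hsum hN pr _ _ k0 (introN idP nkk) e.
  exact: (symlem _ _ _ hsupp hsum hN pr _ d1 hd).
exact: (lam_ne0 _ _ zP _ _ hsum hN pr).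
Qed.
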